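(* For any simplicial complex $K$ and any positive integer $m$, there exists a positive integer $k$ such that the $k$-times iterated barycentric subdivision $K^{(k)}$ of $K$ is $m$-fine.
   Context: For vertices $v,w$ of a simplicial complex $K$, a sequence $p=(\sigma_1,\dots,\sigma_N)$ of $1$-simplices links $(v,w)$ if $v\in\sigma_1$, $w\in\sigma_N$ and $\sigma_i\cap\sigma_{i+1}\ne\varnothing$ for all $i$; its length is $N$. The diameter of a subcomplex $A\subset K$ is $\max_{v,w\in A_0}\min_{p\text{ links }(v,w)}\mathrm{len}(p)$. $K$ is $m$-fine if for every subcomplex $A\subset K$ with diameter $\le m$ one can choose a contractible subcomplex $Z_A$ containing $A$ in such a way that $Z_A\subset Z_B$ whenever $A\subset B$. *)

(* Defs.v *)
From HB Require Import structures.
From mathcomp Require Import all_boot all_order all_algebra finmap.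
From mathcomp Require Import boolp reals.
Set Implicit Arguments. Unset Strict Implicit. Unset Printing Implicit Defensive.
Import Order.TTheory GRing.Theory Num.Theory.
Local Open Scope ring_scope.
Local Open Scope fset_scope.

Definition is_complex (V : choiceType) (K : {fset V} -> Prop) : Prop :=
  (forall s, K s -> s != fset0) /\
  (forall s t, K s -> fsubset t s -> t != fset0 -> K t).

Definition is_vertex (V : choiceType) (K : {fset V} -> Prop) (v : V) : Prop :=
  K [fset v].

Definition is_subcomplex (V : choiceType) (K A : {fset V} -> Prop) : Prop :=
  is_complex A /\ (forall s, A s -> K s) /\ (exists s, A s).

Definition is_1simplex (V : choiceType) (K : {fset V} -> Prop) (s : {fset V}) :=
  K s /\ #|` s| = 2%N.

Definition links (V : choiceType) (K : {fset V} -> Prop)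
    (p : seq {fset V}) (v w : V) : Prop :=
  match p with
  | [::] => False
  | s1 :: _ =>
      (forall s, s \in p -> is_1simplex K s) /\
      v \in s1 /\ w \in last s1 p /\
      (forall i, (i.+1 < size p)%N ->
         nth fset0 p i `&` nth fset0 p i.+1 != fset0)
  end.

Definition diam_le (V : choiceType) (K A : {fset V} -> Prop) (m : nat) : Prop :=
  forall v w, is_vertex A v -> is_vertex A w ->
    exists p, links K p v w /\ (size p <= m)%N.

Definition in_gsimplex (R : realType) (V : choiceType) (s : {fset V})
    (x : V -> R) : Prop :=
  (forall v, v \notin s -> x v = 0) /\ (forall v, v \in s -> 0 <= x v) /\
  \sum_(v <- s) x v = 1.

Definition in_real (R : realType) (V : choiceType) (A : {fset V} -> Prop)
    (x : V -> R) : Prop :=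
  exists s, A s /\ in_gsimplex s x.

Definition in_unit (R : realType) (t : R) := 0 <= t <= 1.

(* |A| (with the weak/CW topology) is contractible: there is a point p of |A|
   and a homotopy H : |A| x [0,1] -> |A| from the identity to the constant map p.
   Continuity of H for the weak topology is expressed simplexwise: |A| x [0,1]
   carries the weak topology w.r.t. the |s| x [0,1], and a map from the compact
   |s| x [0,1] into the CW complex |A| is continuous iff its image lies in a
   finite subcomplex (finite support F) and it is continuous for the euclidean
   topology there. *)
Definition contractible (R : realType) (V : choiceType) (A : {fset V} -> Prop)
  : Prop :=
  exists (p : V -> R) (H : (V -> R) -> R -> (V -> R)),
    in_real A p /\
    (forall x, in_real A x -> H x 0 = x) /\
    (forall x, in_real A x -> H x 1 = p) /\
    (forall x t, in_real A x -> in_unit t -> in_real A (H x t)) /\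
    (forall s, A s ->
       (exists F : {fset V}, forall x t, in_gsimplex s x -> in_unit t ->
            forall v, v \notin F -> H x t v = 0) /\
       (forall x t, in_gsimplex s x -> in_unit t ->
          forall eps : R, 0 < eps -> exists2 delta : R, 0 < delta &
            forall y u, in_gsimplex s y -> in_unit u ->
              (forall v, v \in s -> `|x v - y v| < delta) -> `|t - u| < delta ->
              forall v, `|H x t v - H y u v| < eps)).

Definition m_fine (R : realType) (V : choiceType) (K : {fset V} -> Prop)
    (m : nat) : Prop :=
  exists Z : ({fset V} -> Prop) -> ({fset V} -> Prop),
    (forall A, is_subcomplex K A -> diam_le K A m ->
       is_subcomplex K (Z A) /\ contractible R (Z A) /\
       (forall s, A s -> Z A s)) /\
    (forall A B, is_subcomplex K A -> diam_le K A m ->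
       is_subcomplex K B -> diam_le K B m ->
       (forall s, A s -> B s) -> forall s, Z A s -> Z B s).

Definition sd (V : choiceType) (K : {fset V} -> Prop) : {fset {fset V}} -> Prop :=
  fun c => c != fset0 /\ (forall s, s \in c -> K s) /\
    (forall s t, s \in c -> t \in c -> fsubset s t \/ fsubset t s).

Fixpoint iter_vtx (V : choiceType) (k : nat) : choiceType :=
  match k with
  | 0 => V
  | k'.+1 => {fset (iter_vtx V k')}%type : choiceType
  end.

Fixpoint iter_sd (V : choiceType) (K : {fset V} -> Prop) (k : nat)
  : {fset (iter_vtx V k)} -> Prop :=
  match k return {fset (iter_vtx V k)} -> Prop with
  | 0 => K
  | k'.+1 => sd (@iter_sd V K k')
  end.
Arguments iter_sd {V} K k _.
Arguments iter_vtx V k : clear implicits.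

(* Main.v *)
Require Import Defs.
From HB Require Import structures.
From mathcomp Require Import all_boot all_order all_algebra finmap.
From mathcomp Require Import boolp reals.
From mathcomp Require Import zify ring lra.
Set Implicit Arguments. Unset Strict Implicit. Unset Printing Implicit Defensive.
Import Order.TTheory GRing.Theory Num.Theory.
Local Open Scope fset_scope.
Section Chain.
Variable T : choiceType.

Lemma chain_max_seq (l : seq {fset T}) x : x \in l ->
  (forall a b, a \in l -> b \in l -> a `<=` b \/ b `<=` a) ->
  exists2 s, s \in l & forall a, a \in l -> a `<=` s.
Proof.
elim: l x => [//|a l IH] x xl H.
have Hl : forall a b, a \in l -> b \in l -> a `<=` b \/ b `<=` a.
  by move=> a' b' ha hb; apply: H; rewrite inE ?ha ?hb orbT.
case: l IH xl H Hl => [|y l] IH xl H Hl.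
  by exists a; rewrite ?inE // => b; rewrite inE => /eqP ->.
have [s sl Hs] := IH y (mem_head _ _) Hl.
have sl' : s \in a :: y :: l by rewrite inE sl orbT.
have [as_|sa] := H a s (mem_head _ _) sl'.
  by exists s; [rewrite inE sl orbT|move=> b; rewrite inE => /orP[/eqP->|/Hs]].
exists a; first exact: mem_head.
move=> b; rewrite inE => /orP[/eqP->|/Hs bs]; first exact: fsubset_refl.
exact: fsubset_trans bs sa.
Qed.

Lemma chain_min_seq (l : seq {fset T}) x : x \in l ->
  (forall a b, a \in l -> b \in l -> a `<=` b \/ b `<=` a) ->
  exists2 s, s \in l & forall a, a \in l -> s `<=` a.
Proof.
elim: l x => [//|a l IH] x xl H.
have Hl : forall a b, a \in l -> b \in l -> a `<=` b \/ b `<=` a.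
  by move=> a' b' ha hb; apply: H; rewrite inE ?ha ?hb orbT.
case: l IH xl H Hl => [|y l] IH xl H Hl.
  by exists a; rewrite ?inE // => b; rewrite inE => /eqP ->.
have [s sl Hs] := IH y (mem_head _ _) Hl.
have sl' : s \in a :: y :: l by rewrite inE sl orbT.
have [as_|sa] := H a s (mem_head _ _) sl'.
  exists a; first exact: mem_head.
  move=> b; rewrite inE => /orP[/eqP->|/Hs bs]; first exact: fsubset_refl.
  exact: fsubset_trans as_ bs.
by exists s; [rewrite inE sl orbT|move=> b; rewrite inE => /orP[/eqP->|/Hs]].
Qed.

Lemma chain_max (C : {fset {fset T}}) x : x \in C ->
  (forall a b, a \in C -> b \in C -> a `<=` b \/ b `<=` a) ->
  exists2 s, s \in C & forall a, a \in C -> a `<=` s.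
Proof. exact: chain_max_seq. Qed.

Lemma chain_min (C : {fset {fset T}}) x : x \in C ->
  (forall a b, a \in C -> b \in C -> a `<=` b \/ b `<=` a) ->
  exists2 s, s \in C & forall a, a \in C -> s `<=` a.
Proof. exact: chain_min_seq. Qed.

Lemma sd_complex (Y : {fset T} -> Prop) : is_complex Y -> is_complex (sd Y).
Proof.
move=> [Y0 Y1]; split; first by move=> s [].
move=> s t [s0 [sY sc]] ts t0; split=> //; split.
  by move=> a /(fsubsetP ts) /sY.
by move=> a b /(fsubsetP ts) ha /(fsubsetP ts) hb; apply: sc.
Qed.

Lemma complex_ne0 (Y : {fset T} -> Prop) s : is_complex Y -> Y s -> exists x, x \in s.
Proof.
move=> [Y0 _] /Y0 /fset0Pn [x hx]; by exists x.
Qed.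

Lemma complex_sub (Y : {fset T} -> Prop) s t : is_complex Y -> Y s -> t `<=` s ->
  (exists x, x \in t) -> Y t.
Proof.
move=> [_ Y1] Ys ts [x xt]; apply: Y1 Ys ts _; apply/fset0Pn; by exists x.
Qed.

End Chain.

Lemma iter_sd_complex (V : choiceType) (K : {fset V} -> Prop) k :
  is_complex K -> is_complex (iter_sd K k).
Proof. by move=> HK; elim: k => [|k IH] //=; apply: sd_complex. Qed.

Lemma iter_sd_mono (V : choiceType) (Y Y' : {fset V} -> Prop) k :
  (forall s, Y s -> Y' s) -> forall c, iter_sd Y k c -> iter_sd Y' k c.
Proof.
move=> HY; elim: k => [|k IH] c //=; first exact: HY.
by move=> [c0 [cY cc]]; split=> //; split=> // s /cY /IH.
Qed.
Fixpoint car (V : choiceType) (k : nat) : iter_vtx V k -> {fset V} :=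
  match k return iter_vtx V k -> {fset V} with
  | 0 => fun u => [fset u]
  | k'.+1 => fun x : {fset iter_vtx V k'} => \bigcup_(w <- x) @car V k' w
  end.

Section Car.
Variable V : choiceType.

Lemma car1 (c : {fset V}) : @car V 1 c = c.
Proof.
apply/fsetP=> v; apply/bigfcupP/idP => [[w /andP[wc _]]|vc].
  by rewrite inE => /eqP ->.
by exists v; rewrite ?vc ?inE.
Qed.

Lemma car_sub k (x : {fset iter_vtx V k}) w : w \in x -> car w `<=` @car V k.+1 x.
Proof. by move=> wx; apply: (@bigfcup_sup _ _ x w predT (@car V k)). Qed.

Lemma car_mono k (x y : {fset iter_vtx V k}) : x `<=` y -> @car V k.+1 x `<=` @car V k.+1 y.
Proof.
move=> xy; apply/bigfcupsP => w wx _; apply: car_sub; exact: (fsubsetP xy).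
Qed.

Lemma car_memP k (x : {fset iter_vtx V k}) v :
  reflect (exists2 w, w \in x & v \in car w) (v \in @car V k.+1 x).
Proof.
apply: (iffP (bigfcupP _ _ _ _)) => [[w /andP[wx _] vw]|[w wx vw]]; exists w => //.
by rewrite wx.
Qed.

Variable K : {fset V} -> Prop.
Hypothesis HK : is_complex K.

Lemma car_simplex k (c : {fset iter_vtx V k}) : iter_sd K k c -> K (@car V k.+1 c).
Proof.
elim: k c => [|k IH] c; first by move=> Kc; rewrite car1.
move=> [c0 [cY cc]].
have [x xc] : exists x, x \in c by apply/fset0Pn.
have [p pc Hp] := chain_max xc cc.
have Kp := IH _ (cY _ pc).
apply: (complex_sub HK Kp).
  apply/bigfcupsP => w wc _; apply: car_mono; exact: Hp.
have [v vp] := complex_ne0 HK Kp.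
exists v; apply/car_memP; by exists p.
Qed.

Lemma car_sub_complex (Y : {fset V} -> Prop) k (c : {fset iter_vtx V k}) :
  is_complex Y -> iter_sd K k c -> Y (@car V k.+1 c) -> iter_sd Y k c.
Proof.
move=> HY; elim: k c => [|k IH] c; first by move=> _; rewrite car1.
move=> [c0 [cY cc]] Yc; split=> //; split=> // x xc.
apply: IH; first exact: cY.
apply: (complex_sub HY Yc); first exact: car_sub.
exact: complex_ne0 HK (car_simplex (cY _ xc)).
Qed.

End Car.

Fixpoint reach (T : choiceType) (M : {fset T} -> Prop) (S : {fset T}) (d : nat) (w : T)
  : Prop :=
  match d with
  | 0 => w \in S
  | d'.+1 => reach M S d' w \/ exists u, reach M S d' u /\ M [fset u; w]
  end.

Lemma reach_mono (T : choiceType) (M : {fset T} -> Prop) S d d' w :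
  (d <= d')%N -> reach M S d w -> reach M S d' w.
Proof.
move=> /subnK <-; elim: (d' - d)%N => [//|n IH] H.
by rewrite addSn /=; left; apply: IH.
Qed.

Lemma star_lemma (V : choiceType) (K : {fset V} -> Prop) : is_complex K ->
  forall k (s : {fset iter_vtx V k.+1}), iter_sd K k.+1 s ->
  exists v, forall d w, (d <= k)%N -> reach (iter_sd K k.+1) s d w -> v \in @car V k.+1 w.
Proof.
move=> HK; elim=> [|k IH] s.
  move=> [s0 [sK sc]].
  have [x xs] : exists x, x \in s by apply/fset0Pn.
  have [p ps Hp] := chain_min xs sc.
  have [v vp] := complex_ne0 HK (sK _ ps).
  exists v => d w; rewrite leqn0 => /eqP -> ws.
  by rewrite car1; apply: (fsubsetP (Hp _ ws)).
move=> Hs; have HKk := iter_sd_complex k.+1 HK.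
have [s0 [sK sc]] := Hs.
have [x xs] : exists x, x \in s by apply/fset0Pn.
have [p ps Hp] := chain_max xs sc.
have [v Hv] := IH p (sK _ ps).
have Q : forall d w, reach (iter_sd K k.+2) s d w ->
    exists2 w', w' \in w & reach (iter_sd K k.+1) p d.-1 w'.
  elim=> [|d IHd] w /=.
    move=> ws; have [w' w'w] := complex_ne0 HKk (sK _ ws).
    by exists w' => //=; apply: (fsubsetP (Hp _ ws)).
  case=> [/IHd [w' w'w Rw']|[u [Ru Huw]]].
    by exists w' => //; apply: reach_mono Rw'; case: d {IHd} => //= n; rewrite leqnSn.
  have [_ [Hel Hch]] := Huw.
  have Sw : iter_sd K k.+1 w by apply: Hel; rewrite !inE eqxx orbT.
  have Su : iter_sd K k.+1 u by apply: Hel; rewrite !inE eqxx.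
  have [w'' w''u Rw''] := IHd u Ru.
  have uin : u \in [fset u; w] by rewrite !inE eqxx.
  have win : w \in [fset u; w] by rewrite !inE eqxx orbT.
  have [uw|wu] := Hch u w uin win.
    exists w''; first exact: (fsubsetP uw).
    by apply: reach_mono Rw''; case: d {IHd Ru} => //= n _; rewrite leqnSn.
  have [w' w'w] := complex_ne0 HKk Sw.
  exists w' => //.
  case: d {IHd} Ru Rw'' => [|d] Ru Rw'' /=.
    by apply: (fsubsetP (Hp _ Ru)); apply: (fsubsetP wu).
  right; exists w''; split => //.
  apply: (complex_sub HKk Su).
    by apply/fsubsetP => z; rewrite !inE => /orP[/eqP->//|/eqP->]; apply: (fsubsetP wu).
  by exists w''; rewrite !inE eqxx.
exists v => d w dk /Q [w' w'w Rw'].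
apply: (fsubsetP (@car_sub V k.+1 w w' w'w)); apply: Hv Rw'.
by case: d dk.
Qed.
Lemma links_reach_aux (T : choiceType) (M : {fset T} -> Prop) S :
  is_complex M ->
  forall (q : seq {fset T}) (e : {fset T}) d, (forall b, b \in e -> reach M S d b) ->
  (forall s, s \in e :: q -> is_1simplex M s) ->
  (forall i, (i.+1 < size (e :: q))%N ->
      nth fset0 (e :: q) i `&` nth fset0 (e :: q) i.+1 != fset0) ->
  forall b, b \in last e q -> reach M S (d + size q) b.
Proof.
move=> HM; elim=> [|e' q IH] e d He H1 Hn b /=; first by rewrite addn0; apply: He.
move=> bl; rewrite addnS -addSn; apply: (IH e') => //.
- move=> b' b'e'.
  have /fset0Pn [c] := Hn 0%N erefl; rewrite inE => /andP[ce ce'].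
  right; exists c; split; first exact: He.
  have [Me' _] : is_1simplex M e' by apply: H1; rewrite !inE eqxx orbT.
  apply: (complex_sub HM Me').
    by apply/fsubsetP => z; rewrite !inE => /orP[/eqP->|/eqP->].
  by exists c; rewrite !inE eqxx.
- by move=> s sq; apply: H1; rewrite inE sq orbT.
- by move=> i hi; apply: (Hn i.+1).
Qed.

Lemma links_reach (T : choiceType) (M : {fset T} -> Prop) p v w :
  is_complex M -> links M p v w -> reach M [fset v] (size p) w.
Proof.
move=> HM; case: p => [//|e q] [H1 [ve [wl Hn]]].
have := @links_reach_aux T M [fset v] HM q e 1 _ H1 Hn w wl.
rewrite add1n; apply.
move=> b be; right; exists v; split; first by rewrite /= inE.
have [Me _] := H1 e (mem_head _ _).
apply: (complex_sub HM Me).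
  by apply/fsubsetP => z; rewrite !inE => /orP[/eqP->|/eqP->].
by exists v; rewrite !inE eqxx.
Qed.
Section MinMax.
Variable R : realType.
Variable T : eqType.
Local Open Scope ring_scope.
Implicit Types (s : seq T) (f : T -> R).

Definition bmin s f := \big[Num.min/1]_(v <- s) f v.
Definition bmax s f := \big[Num.max/0]_(v <- s) f v.

Lemma bmin_le s f v : v \in s -> bmin s f <= f v.
Proof.
rewrite /bmin; elim: s => [//|a s IH]; rewrite inE big_cons => /orP[/eqP->|/IH h].
  by rewrite ge_min lexx.
by rewrite ge_min h orbT.
Qed.

Lemma bmin_ge s f a : a <= 1 -> (forall v, v \in s -> a <= f v) -> a <= bmin s f.
Proof.
rewrite /bmin => a1; elim: s => [|b s IH] H; first by rewrite big_nil.
rewrite big_cons le_min H ?mem_head //=; apply: IH => v vs; apply: H; rewrite inE vs orbT //.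
Qed.

Lemma bmin_att s f : s != [::] -> (forall v, v \in s -> f v <= 1) ->
  exists2 v, v \in s & bmin s f = f v.
Proof.
rewrite /bmin; elim: s => [//|b s IH] _ H; rewrite big_cons.
case: s IH H => [|c s] IH H.
  by exists b; rewrite ?mem_head // big_nil; apply: min_l; apply: H; rewrite mem_head.
have [|v vs ->] := IH erefl; first by move=> v vs; apply: H; rewrite inE vs orbT.
have [hb|hb] := leP (f b) (f v).
  by exists b; rewrite ?mem_head.
by exists v => //; rewrite inE vs orbT.
Qed.

Lemma bmax_ge s f v : v \in s -> f v <= bmax s f.
Proof.
rewrite /bmax; elim: s => [//|a s IH]; rewrite inE big_cons => /orP[/eqP->|/IH h].
  by rewrite le_max lexx.
by rewrite le_max h orbT.
Qed.

Lemma bmax_ge0 s f : 0 <= bmax s f.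
Proof.
rewrite /bmax; elim: s => [|a s IH]; first by rewrite big_nil.
by rewrite big_cons le_max IH orbT.
Qed.

Lemma bmax_le s f a : 0 <= a -> (forall v, v \in s -> f v <= a) -> bmax s f <= a.
Proof.
rewrite /bmax => a0; elim: s => [|b s IH] H; first by rewrite big_nil.
rewrite big_cons ge_max H ?mem_head //=; apply: IH => v vs; apply: H; rewrite inE vs orbT //.
Qed.

Lemma bmax_att s f : bmax s f = 0 \/ exists2 v, v \in s & bmax s f = f v.
Proof.
rewrite /bmax; elim: s => [|b s IH]; first by left; rewrite big_nil.
rewrite big_cons.
have [hb|hb] := leP (f b) (\big[Num.max/0]_(v <- s) f v).
  case: IH => [->|[v vs ->]]; first by left.
  by right; exists v; rewrite // inE vs orbT.
by right; exists b; rewrite ?mem_head.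
Qed.

End MinMax.
Section Gam.
Variable R : realType.
Variable T : choiceType.
Local Open Scope ring_scope.
Implicit Types (y : T -> R) (F s : {fset T}).

Definition lo y (sg : {fset T}) := bmin sg y.
Definition hi y F (sg : {fset T}) := bmax (F `\` sg) y.
Definition gap y F sg := Num.max 0 (lo y sg - hi y F sg).
Definition gam F y (sg : {fset T}) :=
  if (sg != fset0) && (sg `<=` F) then #|`sg|%:R * gap y F sg else 0.

Lemma gap_ge0 y F sg : 0 <= gap y F sg.
Proof. by rewrite /gap le_max lexx. Qed.

Lemma gam_ge0 F y sg : 0 <= gam F y sg.
Proof. by rewrite /gam; case: ifP => // _; rewrite mulr_ge0 ?gap_ge0. Qed.

Lemma gap0 y F sg v : v \in sg -> y v <= 0 -> gap y F sg = 0.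
Proof.
move=> vs yv; rewrite /gap; apply: max_l.
rewrite subr_le0; apply: le_trans (bmax_ge0 _ _).
exact: le_trans (bmin_le _ vs) yv.
Qed.

Lemma gam_nz F y sg : gam F y sg != 0 ->
  [/\ sg != fset0, sg `<=` F & 0 < gap y F sg].
Proof.
rewrite /gam; case: ifP => [/andP[s0 sF] | _]; last by rewrite eqxx.
rewrite mulf_eq0 negb_or => /andP[_ g0].
by split=> //; rewrite lt_def g0 gap_ge0.
Qed.

Lemma gap_pos y F sg v : 0 < gap y F sg -> v \in sg -> hi y F sg < y v.
Proof.
rewrite /gap => g vs.
have h : 0 < lo y sg - hi y F sg.
  by move: g; rewrite lt_max ltxx.
rewrite subr_gt0 in h; exact: lt_le_trans h (bmin_le _ vs).
Qed.

Lemma gam_pos F y sg v : gam F y sg != 0 -> v \in sg -> 0 < y v.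
Proof.
move=> /gam_nz [_ _ g] vs; exact: le_lt_trans (bmax_ge0 _ _) (gap_pos g vs).
Qed.

Lemma gam_chain F y sg tau : gam F y sg != 0 -> gam F y tau != 0 ->
  sg `<=` tau \/ tau `<=` sg.
Proof.
move=> /gam_nz [_ sF gs] /gam_nz [_ tF gt].
case: (boolP (sg `<=` tau)) => [|/fsubsetPn [v vs vt]]; first by left.
case: (boolP (tau `<=` sg)) => [|/fsubsetPn [w wt ws]]; first by right.
exfalso.
have h1 : y v <= hi y F tau by apply: bmax_ge; rewrite inE vt (fsubsetP sF).
have h2 : y w <= hi y F sg by apply: bmax_ge; rewrite inE ws (fsubsetP tF).
have h3 := gap_pos gt wt.
have h4 := gap_pos gs vs.
have := lt_le_trans (le_lt_trans h1 h3) h2.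
by move/lt_trans/(_ h4); rewrite ltxx.
Qed.

Lemma gam_indep F1 F2 y sg : F1 `<=` F2 -> (forall v, v \notin F1 -> y v = 0) ->
  (forall v, 0 <= y v) -> gam F1 y sg = gam F2 y sg.
Proof.
move=> F12 y0 ypos; rewrite /gam.
case: (boolP (sg == fset0)) => //= s0.
case: (boolP (sg `<=` F1)) => sF1.
  rewrite (fsubset_trans sF1 F12); congr (_ * _); rewrite /gap; congr (Num.max 0 (_ - _)).
  apply: le_anti; apply/andP; split.
    apply: bmax_le; first exact: bmax_ge0.
    move=> w; rewrite inE => /andP[ws wF1]; apply: bmax_ge.
    by rewrite inE ws (fsubsetP F12).
  apply: bmax_le; first exact: bmax_ge0.
  move=> w; rewrite inE => /andP[ws wF2].
  case: (boolP (w \in F1)) => wF1.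
    by apply: bmax_ge; rewrite inE ws.
  by rewrite y0 // bmax_ge0.
case: ifP => // _.
have [v vs vF1] := fsubsetPn _ _ sF1.
by rewrite (gap0 _ vs) ?mulr0 // y0.
Qed.

Lemma sum_const_fset (F : {fset T}) (c : R) : \sum_(v <- F) c = #|`F|%:R * c.
Proof.
rewrite /=; elim: (enum_fset F) => [|a l IH]; first by rewrite big_nil mul0r.
by rewrite big_cons IH /= -nat1r mulrDl mul1r.
Qed.

End Gam.
Section Gam2.
Variable R : realType.
Variable T : choiceType.
Local Open Scope ring_scope.
Implicit Types (y : T -> R) (F s : {fset T}).

Lemma bmin_eq (l : seq T) (f g : T -> R) : (forall v, v \in l -> f v = g v) -> bmin l f = bmin l g.
Proof. by move=> H; rewrite /bmin big_seq_cond [RHS]big_seq_cond; apply: eq_bigr => v /andP[/H]. Qed.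

Lemma bmax_eq (l : seq T) (f g : T -> R) : (forall v, v \in l -> f v = g v) -> bmax l f = bmax l g.
Proof. by move=> H; rewrite /bmax big_seq_cond [RHS]big_seq_cond; apply: eq_bigr => v /andP[/H]. Qed.

Lemma lo_shift y' c (tau : {fset T}) : tau != fset0 ->
  (forall v, v \in tau -> y' v + c <= 1) -> (forall v, y' v <= 1) ->
  lo (fun v => y' v + c) tau = lo y' tau + c.
Proof.
move=> t0 H1 H2; have tne : (tau : seq T) != [::].
  by apply: contra t0 => /eqP h; apply/eqP/fsetP => v; rewrite -[v \in tau]/(v \in (tau : seq T)) h inE.
rewrite /lo; apply: le_anti; apply/andP; split.
  have [v vt ->] := bmin_att tne (fun v _ => H2 v).
  exact: bmin_le vt.
have [v vt ->] := bmin_att tne H1.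
by rewrite lerD2r; apply: bmin_le.
Qed.

Lemma gam_shift F s y' c z : s `<=` F -> z \in s -> y' z = 0 ->
  (forall v, 0 <= y' v) -> (forall v, v \notin s -> y' v = 0) -> 0 <= c ->
  (forall v, y' v + c <= 1) ->
  forall tau, gam F (fun v => y' v + (if v \in s then c else 0)) tau =
     gam F y' tau + (if tau == s then #|`s|%:R * c else 0).
Proof.
move=> sF zs y'z y'0 y'out c0 y'1 tau.
set y := fun v => _.
have c1 : c <= 1 by have := y'1 z; rewrite y'z add0r.
have y'le1 : forall v, y' v <= 1 by move=> v; apply: le_trans (y'1 v); rewrite lerDl.
have s0 : s != fset0 by apply/fset0Pn; exists z.
case: (boolP (tau == s)) => [/eqP -> | ts].
  rewrite /gam s0 sF /=.
  have lo_y : lo y s = c.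
    apply: le_anti; apply/andP; split.
      by apply: le_trans (bmin_le _ zs) _; rewrite /y zs y'z add0r.
    by apply: bmin_ge => // v vs; rewrite /y vs lerDr.
  have lo_y' : lo y' s = 0.
    apply: le_anti; apply/andP; split; first by rewrite -y'z; apply: bmin_le.
    by apply: bmin_ge => // v _; apply: y'0.
  have hi_y : hi y F s = 0.
    apply: le_anti; rewrite bmax_ge0 andbT; apply: bmax_le => // w.
    by rewrite inE /y => /andP[/negbTE ws _]; rewrite ws y'out ?ws // addr0.
  have hi_y' : hi y' F s = 0.
    apply: le_anti; rewrite bmax_ge0 andbT; apply: bmax_le => // w.
    by rewrite inE => /andP[ws _]; rewrite y'out.
  rewrite /gap lo_y lo_y' hi_y hi_y' !subr0 maxxx mulr0 add0r.
  by congr (_ * _); apply: max_r.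
rewrite addr0 /gam; case: ifP => // /andP[t0 tF].
congr (_ * _).
case: (boolP (tau `<=` s)) => tsub; last first.
  have [v vt vs] := fsubsetPn _ _ tsub.
  have yv : y v = 0 by rewrite /y (negbTE vs) y'out // addr0.
  by rewrite (@gap0 _ _ y F tau v vt) ?yv // (@gap0 _ _ y' F tau v vt) // y'out.
have [w0 w0s w0t] : exists2 w, w \in s & w \notin tau.
  by apply/fsubsetPn; apply: contra ts => st; rewrite eqEfsubset tsub st.
have lo_eq : lo y tau = lo y' tau + c.
  rewrite -(lo_shift t0 (fun v _ => y'1 v) y'le1).
  by apply: bmin_eq => v vt; rewrite /y (fsubsetP tsub v vt).
have hi_eq : hi y F tau = hi y' F tau + c.
  apply: le_anti; apply/andP; split.
    apply: bmax_le; first by rewrite addr_ge0 ?bmax_ge0.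
    move=> w wFt; rewrite /y; apply: lerD; first exact: bmax_ge.
    by case: ifP.
  have w0in : w0 \in F `\` tau by rewrite inE w0t (fsubsetP sF).
  have hyw0 : c <= hi y F tau.
    by apply: le_trans (bmax_ge _ w0in); rewrite /y w0s lerDr.
  case: (bmax_att (F `\` tau) y') => [h|[w wFt h]]; rewrite /hi h.
    by rewrite add0r.
  case: (boolP (w \in s)) => ws.
    by have := bmax_ge y wFt; rewrite /y ws.
  by rewrite y'out // add0r.
rewrite /gap lo_eq hi_eq; congr (Num.max 0 _).
by rewrite opprD addrACA subrr addr0.
Qed.
End Gam2.
Section Gam3.
Variable R : realType.
Variable T : choiceType.
Local Open Scope ring_scope.
Implicit Types (y : T -> R) (F s : {fset T}).

Lemma gam_empty F y : (forall v, y v <= 0) -> forall tau, gam F y tau = 0.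
Proof.
move=> y0 tau; rewrite /gam; case: ifP => // /andP[t0 _].
have [v vt] := fset0Pn _ t0; by rewrite (gap0 _ vt) ?mulr0.
Qed.

Lemma sum_fpowerset0 (f : {fset T} -> R) : f fset0 = 0 ->
  \sum_(sg <- fpowerset fset0) f sg = 0.
Proof. by move=> f0; rewrite fpowerset0 big_seq_fset1. Qed.

Lemma sum_indic (P : {fset {fset T}}) a (c : R) : a \in P ->
  \sum_(sg <- P) (if sg == a then c else 0) = c.
Proof.
move=> aP; rewrite (big_fsetD1 a) //= eqxx big1_fset ?addr0 //.
by move=> sg; rewrite in_fsetD1 => /andP[/negbTE -> _].
Qed.

Lemma gam_mass n F y : (#|`F| <= n)%N -> (forall v, 0 <= y v) -> (forall v, y v <= 1) ->
  (forall v, v \notin F -> y v = 0) ->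
  \sum_(sg <- fpowerset F) gam F y sg = \sum_(v <- F) y v.
Proof.
elim: n F y => [|n IH] F y.
  rewrite leqn0 => /eqP /cardfs0_eq -> _ _ _.
  by rewrite sum_fpowerset0 ?big_seq_fset0 // /gam eqxx.
move=> Fn y0 y1 yout.
case: (boolP (F == fset0)) => [/eqP -> | F0].
  by rewrite sum_fpowerset0 ?big_seq_fset0 // /gam eqxx.
have Fne : (F : seq T) != [::].
  by apply: contra F0 => /eqP h; apply/eqP/fsetP => v; rewrite -[v \in F]/(v \in (F : seq T)) h inE.
have [z zF hz] := bmin_att Fne (fun v _ => y1 v).
have zmin : forall v, v \in F -> y z <= y v by move=> v vF; rewrite -hz; apply: bmin_le.
set c := y z.
pose y' := fun v => y v - (if v \in F then c else 0).
have y'0 : forall v, 0 <= y' v.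
  by move=> v; rewrite /y' subr_ge0; case: ifP => vF; [apply: zmin|].
have y'out : forall v, v \notin F -> y' v = 0.
  by move=> v vF; rewrite /y' (negbTE vF) subr0 yout.
have y'z : y' z = 0 by rewrite /y' zF subrr.
have y'1 : forall v, y' v + c <= 1.
  move=> v; rewrite /y'; case: ifP => vF; first by rewrite subrK.
  by rewrite subr0 yout ?vF // add0r; apply: y1.
have yE : y = (fun v => y' v + (if v \in F then c else 0)).
  by apply: funext => v; rewrite /y' subrK.
have Hsh := gam_shift (fsubset_refl F) zF y'z y'0 y'out (y0 z) y'1.
set F' := F `\ z.
have F'F : F' `<=` F by apply: fsubD1set.
have y'out' : forall v, v \notin F' -> y' v = 0.
  move=> v; rewrite in_fsetD1 negb_and negbK => /orP[/eqP->//|vF]; exact: y'out.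
have Hind : forall sg, gam F y' sg = gam F' y' sg.
  by move=> sg; rewrite (@gam_indep _ _ F' F y' sg F'F y'out' y'0).
have cardF' : (#|`F'| <= n)%N.
  by move: Fn; rewrite (cardfsD1 z F) zF.
have y'le1 : forall v, y' v <= 1.
  by move=> v; apply: le_trans (y'1 v); rewrite lerDl y0.
have IH' := IH F' y' cardF' y'0 y'le1 y'out'.
rewrite yE.
rewrite (eq_bigr (fun sg => gam F' y' sg + (if sg == F then #|`F|%:R * c else 0)));
  last by move=> sg _; rewrite Hsh Hind.
rewrite big_split /= sum_indic; last by rewrite fpowersetE fsubset_refl.
rewrite -(@big_fset_incl _ _ _ _ (fpowerset F')); last first.
- by move=> sg _; rewrite fpowersetE => h; rewrite /gam (negbTE h) andbF.
- by rewrite fpowersetS.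
rewrite IH' [RHS]big_split /= -sum_const_fset.
congr (_ + _); last by apply: eq_big_seq => v /= ->.
by rewrite [RHS](big_fsetD1 z) //= y'z add0r.
Qed.

End Gam3.
Section Beta.
Variable R : realType.
Variable T : choiceType.
Local Open Scope ring_scope.
Implicit Types (y : T -> R) (F s : {fset T}) (C : {fset {fset T}}) (x : {fset T} -> R).

Definition beta C x : T -> R :=
  fun u => \sum_(sg <- C) x sg * ((u \in sg)%:R / #|`sg|%:R).

Lemma frac_le1 (u : T) sg : 0 <= ((u \in sg)%:R / #|`sg|%:R : R) <= 1.
Proof.
case: (boolP (u \in sg)) => us; last by rewrite mul0r lexx ler01.
have cp : (0 < #|`sg|)%N by rewrite cardfs_gt0; apply/fset0Pn; exists u.
rewrite mul1r invr_ge0 ler0n /= invf_le1 ?ltr0n // ler1n //.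
Qed.

Lemma beta_ge0 C x u : (forall sg, 0 <= x sg) -> 0 <= beta C x u.
Proof.
move=> x0; apply: sumr_ge0 => sg _; apply: mulr_ge0 => //.
by case/andP: (frac_le1 u sg).
Qed.

Lemma beta_le C x u : (forall sg, 0 <= x sg) -> beta C x u <= \sum_(sg <- C) x sg.
Proof.
move=> x0; apply: ler_sum => sg _; apply: ler_piMr => //.
by case/andP: (frac_le1 u sg).
Qed.

Lemma beta_out C x u : (forall sg, sg \in C -> u \notin sg) -> beta C x u = 0.
Proof.
move=> H; apply: big1_fset => sg sgC _; by rewrite (negbTE (H _ sgC)) mul0r mulr0.
Qed.

Lemma beta_D1 C x s u : s \in C ->
  beta C x u = beta (C `\ s) x u + x s * ((u \in s)%:R / #|`s|%:R).
Proof. by move=> sC; rewrite /beta (big_fsetD1 s) //= addrC. Qed.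

Lemma beta_ext C x x' u : (forall sg, sg \in C -> x sg = x' sg) -> beta C x u = beta C x' u.
Proof. by move=> H; apply: eq_fbigr => sg sgC _; rewrite H. Qed.

Definition chainC C := forall a b, a \in C -> b \in C -> a `<=` b \/ b `<=` a.

Lemma gam_beta n C x F : (#|`C| <= n)%N -> chainC C ->
  (forall sg, sg \in C -> sg != fset0) -> (forall sg, sg \in C -> sg `<=` F) ->
  (forall sg, 0 <= x sg) -> (forall sg, sg \notin C -> x sg = 0) ->
  \sum_(sg <- C) x sg <= 1 ->
  forall tau, gam F (beta C x) tau = x tau.
Proof.
elim: n C x => [|n IH] C x.
  rewrite leqn0 => /eqP /cardfs0_eq -> _ _ _ _ xout _ tau.
  rewrite gam_empty ?xout // => v; by rewrite /beta big_seq_fset0.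
move=> Cn Cch C0 CF x0 xout xs1 tau.
case: (boolP (C == fset0)) => [/eqP CE | Cne].
  subst C; rewrite xout // gam_empty // => v; by rewrite /beta big_seq_fset0.
have [x1 x1C] := fset0Pn _ Cne.
have [s sC smax] := chain_max x1C Cch.
set C' := C `\ s.
pose x' := fun sg => if sg == s then 0 else x sg.
have s0 := C0 _ sC.
have cardpos : (0 < #|`s|)%N by rewrite cardfs_gt0.
have cardnz : #|`s|%:R != 0 :> R by rewrite pnatr_eq0 -lt0n.
set c := x s / #|`s|%:R.
have yE : beta C x = (fun u => beta C' x' u + (if u \in s then c else 0)).
  apply: funext => u; rewrite (beta_D1 _ _ sC); congr (_ + _).
    by apply: beta_ext => sg; rewrite in_fsetD1 /x' => /andP[/negbTE ->].
  by case: (u \in s); rewrite ?mul1r // mul0r mulr0.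
have C'sub : forall sg, sg \in C' -> sg `<=` s.
  by move=> sg; rewrite in_fsetD1 => /andP[_ /smax].
have [z zs zC'] : exists2 z, z \in s & forall sg, sg \in C' -> z \notin sg.
  case: (boolP (C' == fset0)) => [/eqP C'E | C'ne].
    have [z zs] := fset0Pn _ s0; exists z => // sg; by rewrite C'E.
  have [x2 x2C'] := fset0Pn _ C'ne.
  have C'ch : chainC C'.
    by move=> a b; rewrite !in_fsetD1 => /andP[_ aC] /andP[_ bC]; apply: Cch.
  have [s2 s2C' s2max] := chain_max x2C' C'ch.
  have ns : ~~ (s `<=` s2).
    move: s2C'; rewrite in_fsetD1 => /andP[s2s s2C]; apply: contra s2s => ss2.
    by rewrite eq_sym eqEfsubset ss2 smax.
  have [z zs zs2] := fsubsetPn _ _ ns.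
  exists z => // sg /s2max sgs2; apply: contra zs2; exact: (fsubsetP sgs2).
have x'0 : forall sg, 0 <= x' sg by move=> sg; rewrite /x'; case: ifP.
have y'z : beta C' x' z = 0 by apply: beta_out.
have y'out : forall v, v \notin s -> beta C' x' v = 0.
  move=> v vs; apply: beta_out => sg /C'sub sgs; apply: contra vs; exact: (fsubsetP sgs).
have c0 : 0 <= c by rewrite divr_ge0 ?x0.
have sumC : \sum_(sg <- C) x sg = x s + \sum_(sg <- C') x' sg.
  rewrite (big_fsetD1 s) //=; congr (_ + _).
  by apply: eq_fbigr => sg; rewrite in_fsetD1 /x' => /andP[/negbTE ->].
have cle : c <= x s.
  rewrite /c ler_pdivrMr ?ltr0n // ler_peMr ?x0 // ler1n //.
have y'1 : forall v, beta C' x' v + c <= 1.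
  move=> v; apply: le_trans xs1; rewrite sumC addrC; apply: lerD => //.
  exact: beta_le.
have Hsh := gam_shift (CF _ sC) zs y'z (fun v => beta_ge0 C' v x'0) y'out c0 y'1 tau.
have C'n : (#|`C'| <= n)%N by move: Cn; rewrite (cardfsD1 s C) sC.
have IH' := IH C' x' C'n.
rewrite yE Hsh IH' //.
- rewrite /x'; case: (boolP (tau == s)) => [/eqP -> | _]; last by rewrite addr0.
  by rewrite add0r /c mulrC divfK.
- by move=> a b; rewrite !in_fsetD1 => /andP[_ aC] /andP[_ bC]; apply: Cch.
- by move=> sg; rewrite in_fsetD1 => /andP[_ /C0].
- by move=> sg; rewrite in_fsetD1 => /andP[_ /CF].
- move=> sg; rewrite in_fsetD1 negb_and negbK /x' => /orP[/eqP->|sgC]; first by rewrite eqxx.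
  by case: ifP => // _; apply: xout.
- apply: le_trans xs1; rewrite sumC lerDr; exact: x0.
Qed.

End Beta.
Section Lip.
Variable R : realType.
Variable T : choiceType.
Local Open Scope ring_scope.
Implicit Types (y : T -> R) (F s : {fset T}).

Lemma max0_lip (a b : R) : `|Num.max 0 a - Num.max 0 b| <= `|a - b|.
Proof.
have [ha|ha] := leP 0 a; have [hb|hb] := leP 0 b => //.
- by rewrite subr0 ger0_norm // ger0_norm; lra.
- by rewrite sub0r normrN ger0_norm // ltr0_norm; lra.
- by rewrite subrr normr0 normr_ge0.
Qed.

Lemma lo_lip y y' e (sg : {fset T}) : sg != fset0 ->
  (forall v, v \in sg -> `|y v - y' v| <= e) ->
  (forall v, y v <= 1) -> (forall v, y' v <= 1) -> `|lo y sg - lo y' sg| <= e.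
Proof.
move=> s0 H y1 y'1.
have sne : (sg : seq T) != [::].
  by apply: contra s0 => /eqP h; apply/eqP/fsetP => v; rewrite -[v \in sg]/(v \in (sg : seq T)) h inE.
rewrite /lo ler_norml; apply/andP; split.
  have [v vs ->] := bmin_att sne (fun v _ => y1 v).
  have := H v vs; rewrite ler_norml => /andP[h1 _].
  apply: le_trans h1 _; rewrite lerD2l lerN2; exact: bmin_le.
have [v vs ->] := bmin_att sne (fun v _ => y'1 v).
have := H v vs; rewrite ler_norml => /andP[_ h2].
apply: le_trans h2; rewrite lerD2r; exact: bmin_le.
Qed.

Lemma hi_lip y y' e F (sg : {fset T}) : 0 <= e ->
  (forall v, v \in F -> `|y v - y' v| <= e) -> `|hi y F sg - hi y' F sg| <= e.
Proof.
move=> e0 H; rewrite /hi ler_norml; apply/andP; split.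
  case: (bmax_att (F `\` sg) y') => [->|[w wF ->]].
    by rewrite subr0; apply: le_trans (bmax_ge0 _ _); rewrite oppr_le0.
  have wF' : w \in F by move: wF; rewrite inE => /andP[].
  have := H w wF'; rewrite ler_norml => /andP[h1 _].
  apply: le_trans h1 _; rewrite lerD2r; exact: bmax_ge.
case: (bmax_att (F `\` sg) y) => [->|[w wF ->]].
  by rewrite sub0r; apply: le_trans e0; rewrite oppr_le0 bmax_ge0.
have wF' : w \in F by move: wF; rewrite inE => /andP[].
have := H w wF'; rewrite ler_norml => /andP[_ h2].
apply: le_trans h2; rewrite lerD2l lerN2; exact: bmax_ge.
Qed.

Lemma gam_lip F y y' e sg : 0 <= e -> (forall v, v \in F -> `|y v - y' v| <= e) ->
  (forall v, y v <= 1) -> (forall v, y' v <= 1) ->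
  `|gam F y sg - gam F y' sg| <= #|`sg|%:R * (e + e).
Proof.
move=> e0 H y1 y'1; rewrite /gam; case: ifP => [/andP[s0 sF]|_]; last first.
  by rewrite subrr normr0 mulr_ge0 ?addr_ge0.
rewrite -mulrBr normrM ger0_norm // ler_wpM2l //.
apply: le_trans (max0_lip _ _) _.
have -> : lo y sg - hi y F sg - (lo y' sg - hi y' F sg) =
          (lo y sg - lo y' sg) - (hi y F sg - hi y' F sg) by ring.
apply: le_trans (ler_normB _ _) _; apply: lerD.
  by apply: lo_lip => // v vs; apply: H; apply: (fsubsetP sF).
exact: hi_lip.
Qed.

End Lip.
Section Supp.
Variable R : realType.
Local Open Scope ring_scope.

Definition supp (T : choiceType) (y : T -> R) : {fset T} :=
  match pselect (exists F : {fset T}, forall v, v \notin F -> y v = 0) with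
  | left e => proj1_sig (cid e)
  | right _ => fset0
  end.

Lemma supp_spec (T : choiceType) (y : T -> R) (F : {fset T}) :
  (forall v, v \notin F -> y v = 0) -> forall v, v \notin supp y -> y v = 0.
Proof.
move=> HF; rewrite /supp; case: pselect => [e|n]; last by exfalso; apply: n; exists F.
exact: (proj2_sig (cid e)).
Qed.

Lemma sum_supp_eq (T : choiceType) (f : T -> R) (A B : {fset T}) :
  (forall v, v \notin A -> f v = 0) -> (forall v, v \notin B -> f v = 0) ->
  \sum_(v <- A) f v = \sum_(v <- B) f v.
Proof.
move=> HA HB.
rewrite (@big_fset_incl _ _ _ _ A (A `|` B)) ?fsubsetUl //; last first.
  by move=> v _ vA; apply: HA.
rewrite [RHS](@big_fset_incl _ _ _ _ B (A `|` B)) ?fsubsetUr //.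
by move=> v _ vB; apply: HB.
Qed.

Lemma sum_indic1 (T : choiceType) (P : {fset T}) a (c : R) : a \in P ->
  \sum_(v <- P) (if v == a then c else 0) = c.
Proof.
move=> aP; rewrite (big_fsetD1 a) //= eqxx big1_fset ?addr0 //.
by move=> sg; rewrite in_fsetD1 => /andP[/negbTE -> _].
Qed.

Lemma sum_indicN (T : choiceType) (P : {fset T}) a : a \in P ->
  \sum_(v <- P) ((v == a)%:R : R) = 1.
Proof.
move=> aP; rewrite (big_fsetD1 a) //= eqxx big1_fset ?addr0 //.
by move=> sg; rewrite in_fsetD1 => /andP[/negbTE -> _].
Qed.

Definition gamma (T : choiceType) (y : T -> R) : {fset T} -> R := gam (supp y) y.
Definition betaP (T : choiceType) (x : {fset T} -> R) : T -> R := beta (supp x) x.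

Lemma gamma_eq (T : choiceType) (y : T -> R) (F : {fset T}) :
  (forall v, v \notin F -> y v = 0) -> (forall v, 0 <= y v) -> gamma y = gam F y.
Proof.
move=> HF y0; apply: funext => sg; rewrite /gamma.
rewrite (@gam_indep _ _ (supp y) (supp y `|` F)) ?fsubsetUl //; last exact: supp_spec HF.
by rewrite (@gam_indep _ _ F (supp y `|` F)) ?fsubsetUr.
Qed.

Lemma betaP_eq (T : choiceType) (x : {fset T} -> R) (C : {fset {fset T}}) :
  (forall sg, sg \notin C -> x sg = 0) -> betaP x = beta C x.
Proof.
move=> HC; apply: funext => u; rewrite /betaP /beta.
by apply: sum_supp_eq => sg sgn; [rewrite (supp_spec HC) // | rewrite HC //]; rewrite mul0r.
Qed.

Lemma gs_zero (T : choiceType) (s : {fset T}) (x : T -> R) v :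
  in_gsimplex s x -> v \notin s -> x v = 0.
Proof. by move=> [H _]; apply: H. Qed.

Lemma gs_ge0 (T : choiceType) (s : {fset T}) (x : T -> R) v :
  in_gsimplex s x -> 0 <= x v.
Proof.
move=> [H0 [H1 _]]; case: (boolP (v \in s)) => vs; first exact: H1.
by rewrite H0.
Qed.

Lemma gs_le1 (T : choiceType) (s : {fset T}) (x : T -> R) v :
  in_gsimplex s x -> x v <= 1.
Proof.
move=> Hx; have [H0 [H1 H2]] := Hx; case: (boolP (v \in s)) => vs; last by rewrite H0.
rewrite -H2 (big_fsetD1 v) //= lerDl; apply: sumr_ge0 => w _; exact: gs_ge0 Hx.
Qed.

Lemma in_real_ge0 (T : choiceType) (A : {fset T} -> Prop) (x : T -> R) v :
  in_real A x -> 0 <= x v.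
Proof. by move=> [s [_ Hs]]; apply: gs_ge0 Hs. Qed.

Lemma in_real_le1 (T : choiceType) (A : {fset T} -> Prop) (x : T -> R) v :
  in_real A x -> x v <= 1.
Proof. by move=> [s [_ Hs]]; apply: gs_le1 Hs. Qed.

Lemma in_real_gamma (T : choiceType) (Y : {fset T} -> Prop) (y : T -> R) :
  is_complex Y -> in_real Y y -> in_real (sd Y) (gamma y).
Proof.
move=> HY [s [Ys Hs]].
have y0 : forall v, 0 <= y v by move=> v; apply: gs_ge0 Hs.
have y1 : forall v, y v <= 1 by move=> v; apply: gs_le1 Hs.
have yout : forall v, v \notin s -> y v = 0 by move=> v; apply: gs_zero Hs.
rewrite (gamma_eq yout y0).
pose C := [fset sg in fpowerset s | gam s y sg != 0].
have Cout : forall sg, sg \notin C -> gam s y sg = 0.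
  move=> sg; rewrite !inE /= negb_and negbK => /orP[|/eqP//].
  by rewrite fpowersetE /gam => /negbTE ->; rewrite andbF.
have sumC : \sum_(sg <- C) gam s y sg = 1.
  rewrite (@sum_supp_eq _ _ C (fpowerset s)) //; last first.
    by move=> sg; rewrite fpowersetE /gam => /negbTE ->; rewrite andbF.
  rewrite (@gam_mass _ _ #|`s|) //; by have [_ [_ ->]] := Hs.
have CnzP : forall sg, sg \in C -> gam s y sg != 0.
  by move=> sg; rewrite !inE => /andP[_].
exists C; split; last first.
  split=> //; split=> // sg _; exact: gam_ge0.
split.
  apply/fset0Pn; case: (boolP (C == fset0)) => [/eqP CE|/fset0Pn //].
  by move: sumC; rewrite CE big_seq_fset0 => /eqP; rewrite eq_sym oner_eq0.
split.
  move=> sg /CnzP /gam_nz [s0 ss _]; apply: (complex_sub HY Ys ss).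
  exact/fset0Pn.
move=> a b /CnzP ha /CnzP hb; exact: gam_chain ha hb.
Qed.

Lemma sum_frac (T : choiceType) (s sg : {fset T}) : sg != fset0 -> sg `<=` s ->
  \sum_(u <- s) ((u \in sg)%:R / #|`sg|%:R) = 1 :> R.
Proof.
move=> s0 ss; rewrite -mulr_suml.
rewrite -(@big_fset_incl _ _ _ _ sg s) //; last by move=> v _ /negbTE ->.
have -> : \sum_(u <- sg) ((u \in sg)%:R : R) = \sum_(u <- sg) (1 : R).
  by apply: eq_fbigr => v ->.
rewrite sum_const_fset mulr1 divff // pnatr_eq0 -lt0n cardfs_gt0 //.
Qed.

Lemma beta_gs (T : choiceType) (Y : {fset T} -> Prop) (C : {fset {fset T}}) (x : {fset T} -> R) s :
  is_complex Y -> sd Y C -> in_gsimplex C x -> s \in C ->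
  (forall a, a \in C -> a `<=` s) -> in_gsimplex s (beta C x).
Proof.
move=> HY [C0 [CY Cch]] Hx sC smax.
split.
  move=> v vs; apply: beta_out => sg /smax sgs; apply: contra vs; exact: (fsubsetP sgs).
split.
  move=> v _; apply: beta_ge0 => sg; exact: gs_ge0 Hx.
rewrite /beta exchange_big /=.
have [_ [_ HS]] := Hx.
rewrite -[RHS]HS.
apply: eq_fbigr => sg sgC _; rewrite -mulr_sumr sum_frac ?mulr1 //.
  by have [] := HY; move=> H _; apply: H; apply: CY.
exact: smax.
Qed.

End Supp.
Section Cone.
Variable R : realType.
Local Open Scope ring_scope.

Lemma norm_le_bound (a b c d e : R) : `|a| < e -> `|b| < e -> `|c| < e -> a + b + c = d ->
  `|d| < e + e + e.
Proof.
move=> ha hb hc <-; apply: le_lt_trans (ler_normD _ _) _.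
apply: le_lt_trans (lerD (ler_normD _ _) (lexx _)) _.
by apply: ltrD => //; apply: ltrD.
Qed.

Lemma cone_contractible (T : choiceType) (Y : {fset T} -> Prop) t :
  is_complex Y -> Y [fset t] -> (forall sg, Y sg -> Y (t |` sg)) -> contractible R Y.
Proof.
move=> HY Yt Ycone.
pose p := fun v : T => ((v == t)%:R : R).
pose H := fun (x : T -> R) (s : R) (v : T) => (1 - s) * x v + s * p v.
have Hgs : forall sg x s, in_gsimplex sg x -> in_unit s -> in_gsimplex (t |` sg) (H x s).
  move=> sg x s Hx /andP[s0 s1]; split.
    move=> v; rewrite !inE negb_or => /andP[vt vs].
    by rewrite /H /p (negbTE vt) (gs_zero Hx vs) !mulr0 addr0.
  split.
    move=> v _; rewrite /H /p; apply: addr_ge0; apply: mulr_ge0;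
      rewrite ?subr_ge0 ?ler0n //; exact: gs_ge0 Hx.
  rewrite big_split /= -!mulr_sumr.
  have [_ [_ HS]] := Hx.
  rewrite (@sum_supp_eq _ _ x _ sg) ?HS; last 2 first.
  - by move=> v vn; apply: (gs_zero Hx); apply: contra vn => vs; rewrite !inE vs orbT.
  - by move=> v; apply: (gs_zero Hx).
  by rewrite /p sum_indicN ?mulr1 ?subrK // !inE eqxx.
exists p, H; split.
  exists [fset t]; split => //; split.
    by move=> v; rewrite inE /p => /negbTE ->.
  split; first by move=> v _; rewrite /p ler0n.
  by rewrite big_seq_fset1 /p eqxx.
split.
  by move=> x _; apply: funext => v; rewrite /H subr0 mul1r mul0r addr0.
split.
  by move=> x _; apply: funext => v; rewrite /H subrr mul0r add0r mul1r.
split.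
  move=> x s [sg [Ysg Hx]] Hs; exists (t |` sg); split; first exact: Ycone.
  exact: Hgs.
move=> sg Ysg; split.
  exists (t |` sg) => x s Hx Hs v vn.
  by have [H0 _] := Hgs _ _ _ Hx Hs; apply: H0.
move=> x s Hx Hs eps eps0.
exists (eps / 3); first by rewrite divr_gt0 // ltr0n.
move=> y u Hy Hu Hxy Hsu v.
have e3 : eps = eps / 3 + eps / 3 + eps / 3 by field.
rewrite [X in _ < X]e3.
have [s0 s1] := andP Hs.
apply: (norm_le_bound (a := (1 - s) * (x v - y v)) (b := (u - s) * y v)
                      (c := (s - u) * p v)).
- rewrite normrM ger0_norm ?subr_ge0 //.
  apply: le_lt_trans (ler_piMl _ _) _; rewrite ?normr_ge0 ?lerBlDr ?lerDl //.
  case: (boolP (v \in sg)) => vs; first exact: Hxy.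
  by rewrite (gs_zero Hx vs) (gs_zero Hy vs) subrr normr0 divr_gt0 // ltr0n.
- rewrite normrM distrC; apply: le_lt_trans Hsu.
  apply: ler_piMr; first exact: normr_ge0.
  by rewrite ger0_norm ?(gs_ge0 _ Hy) // (gs_le1 _ Hy).
- rewrite normrM; apply: le_lt_trans Hsu.
  apply: ler_piMr; first exact: normr_ge0.
  by rewrite /p; case: (v == t); rewrite ?normr1 ?normr0 ?ler01.
- rewrite /H; ring.
Qed.

End Cone.
Section Transfer.
Variable R : realType.
Local Open Scope ring_scope.

Lemma beta_lip (T : choiceType) (C : {fset {fset T}}) (x y : {fset T} -> R) v :
  `|beta C x v - beta C y v| <= \sum_(sg <- C) `|x sg - y sg|.
Proof.
rewrite /beta -sumrB; apply: le_trans (ler_norm_sum _ _ _) _.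
apply: ler_sum => sg _; rewrite -mulrBl normrM; apply: ler_piMr; first exact: normr_ge0.
have /andP[f0 f1] := frac_le1 R v sg; by rewrite ger0_norm.
Qed.

Lemma contractible_sd (T : choiceType) (Y : {fset T} -> Prop) :
  is_complex Y -> contractible R Y -> contractible R (sd Y).
Proof.
move=> HY [p [H [Hp [H0 [H1 [Hin Hs]]]]]].
have Hmax : forall C, sd Y C -> exists2 s, s \in C & forall a, a \in C -> a `<=` s.
  move=> C [C0 [_ Cch]]; have [x1 x1C] := fset0Pn _ C0; exact: chain_max x1C Cch.
have Hbeta : forall C (x : {fset T} -> R), sd Y C -> in_gsimplex C x -> forall s, s \in C ->
    (forall a, a \in C -> a `<=` s) ->
    betaP x = beta C x /\ in_gsimplex s (beta C x) /\ Y s.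
  move=> C x HC Hx s sC smax; split; first by apply: betaP_eq => sg; apply: gs_zero Hx.
  split; first exact: beta_gs HY HC Hx sC smax.
  by have [_ [CY _]] := HC; apply: CY.
have Hreal : forall x : {fset T} -> R, in_real (sd Y) x -> in_real Y (betaP x).
  move=> x [C [HC Hx]]; have [s sC smax] := Hmax C HC.
  have [-> [Hg Ys]] := Hbeta C x HC Hx s sC smax; by exists s.
have Hgb : forall C (x : {fset T} -> R), sd Y C -> in_gsimplex C x -> gamma (betaP x) = x.
  move=> C x HC Hx; have [s sC smax] := Hmax C HC.
  have [-> [Hg Ys]] := Hbeta C x HC Hx s sC smax.
  rewrite (@gamma_eq _ _ _ s); last by move=> v; exact: gs_ge0 Hg.
    apply: funext => tau; apply: (@gam_beta _ _ #|`C|) => //.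
    - by have [_ [_ ]] := HC.
    - move=> sg sgC; have [_ [CY _]] := HC; have [Y0 _] := HY; exact: Y0 _ (CY _ sgC).
    - by move=> sg; exact: gs_ge0 Hx.
    - by move=> sg; exact: gs_zero Hx.
    - by have [_ [_ ->]] := Hx.
  by move=> v; exact: gs_zero Hg.
exists (gamma p), (fun x t => gamma (H (betaP x) t)).
split; first exact: in_real_gamma.
split.
  move=> x Hx; have [C [HC Hx']] := Hx; rewrite H0; first exact: Hgb HC Hx'.
  exact: Hreal.
split; first by move=> x Hx; rewrite H1 //; exact: Hreal.
split.
  move=> x t Hx Ht; apply: in_real_gamma => //; apply: Hin => //; exact: Hreal.
move=> C HC; have [s sC smax] := Hmax C HC.
have Ys : Y s by have [_ [CY _]] := HC; apply: CY.
have [[F HF] Hcont] := Hs s Ys.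
have Hz : forall (x : {fset T} -> R) (t : R), in_gsimplex C x -> in_unit t ->
   [/\ in_real Y (H (beta C x) t), (forall v, v \notin F -> H (beta C x) t v = 0) &
       gamma (H (betaP x) t) = gam F (H (beta C x) t)].
  move=> x t Hx Ht; have [Eb [Hg _]] := Hbeta C x HC Hx s sC smax.
  have hr : in_real Y (H (beta C x) t) by apply: Hin => //; exists s.
  have hF : forall v, v \notin F -> H (beta C x) t v = 0 by apply: HF.
  split => //; rewrite Eb; apply: gamma_eq hF _ => v; exact: in_real_ge0 hr.
split.
  exists (fpowerset F) => x t Hx Ht sg sgn.
  have [_ _ ->] := Hz x t Hx Ht.
  by move: sgn; rewrite /gam fpowersetE => /negbTE ->; rewrite andbF.
move=> x t Hx Ht eps eps0.
set N := #|`F|.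
set e1 := eps / (4 * (N.+1)%:R).
have e10 : 0 < e1 by rewrite divr_gt0 // mulr_gt0 // ltr0n.
have [Eb [Hgx _]] := Hbeta C x HC Hx s sC smax.
have [d1 d10 Hd1] := Hcont (beta C x) t Hgx Ht e1 e10.
set M := #|`C|.
have M1 : 0 < M%:R + 1 :> R by have := ler0n R M; lra.
exists (d1 / (M%:R + 1)); first by rewrite divr_gt0.
move=> y u Hy Hu Hxy Htu sg.
have [Eby [Hgy _]] := Hbeta C y HC Hy s sC smax.
have [hrx hFx ->] := Hz x t Hx Ht.
have [hry hFy ->] := Hz y u Hy Hu.
have Md : d1 / (M%:R + 1) <= d1.
  by rewrite ler_pdivrMr // ler_peMr ?(ltW d10) //; have := ler0n R M; lra.
have Hb : forall v, v \in s -> `|beta C x v - beta C y v| < d1.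
  move=> v _; apply: le_lt_trans (beta_lip _ _ _ _) _.
  have Hs2 : \sum_(sg' <- C) `|x sg' - y sg'| <= \sum_(sg' <- C) (d1 / (M%:R + 1)).
    rewrite big_seq [X in _ <= X]big_seq; apply: ler_sum => sg' sgC; apply: ltW; exact: Hxy.
  apply: le_lt_trans Hs2 _.
  rewrite sum_const_fset -/M mulrA ltr_pdivrMr // mulrDr mulr1 mulrC ltrDl //.
have Hv := Hd1 (beta C y) u Hgy Hu Hb (lt_le_trans Htu Md).
case: (boolP (sg `<=` F)) => sF; last first.
  by rewrite /gam (negbTE sF) !andbF subrr normr0.
have L := @gam_lip R T F (H (beta C x) t) (H (beta C y) u) e1 sg (ltW e10)
  (fun v _ => ltW (Hv v)) (fun v => in_real_le1 v hrx) (fun v => in_real_le1 v hry).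
have cs : (#|`sg| <= N.+1)%N by apply: leqW; apply: fsubset_leq_card.
have L2 : #|`sg|%:R * (e1 + e1) <= (N.+1)%:R * (e1 + e1).
  by apply: ler_wpM2r; [rewrite addr_ge0 // ltW | rewrite ler_nat].
apply: le_lt_trans L (le_lt_trans L2 _).
have -> : (N.+1)%:R * (e1 + e1) = eps / 2.
  by rewrite /e1; field; rewrite nat1r pnatr_eq0.
by rewrite ltr_pdivrMr // ltr_pMr // ltr1n.
Qed.

End Transfer.
Lemma iter_contractible (R : realType) (V : choiceType) (Y : {fset V} -> Prop) k :
  is_complex Y -> contractible R Y -> contractible R (iter_sd Y k).
Proof.
move=> HY HC; elim: k => [//|k IH] /=.
apply: contractible_sd => //; exact: iter_sd_complex.
Qed.

Theorem mainTheorem7 (R : realType) (V : choiceType) (K : {fset V} -> Prop)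
    (m : nat) :
  is_complex K -> (0 < m)%N ->
  exists k : nat, (0 < k)%N /\ m_fine R (iter_sd K k) m.
Proof.
move=> HK m0; exists m.+1; split => //.
pose P (A : {fset iter_vtx V m.+1} -> Prop) (v : V) :=
  forall x, is_vertex A x -> v \in @car V m.+1 x.
pose Y (A : {fset iter_vtx V m.+1} -> Prop) : {fset V} -> Prop :=
  fun sg => sg != fset0 /\ exists tau : {fset V}, (forall v, v \in tau <-> P A v) /\ K (sg `|` tau).
have HKk := iter_sd_complex m.+1 HK.
have HYc : forall A, is_complex (Y A).
  move=> A; split; first by move=> s [].
  move=> s t [s0 [tau [Htau Ks]]] ts t0; split => //; exists tau; split => //.
  apply: (complex_sub HK Ks); first by apply: fsetSU.
  by have [z zt] := fset0Pn _ t0; exists z; rewrite inE zt.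
have YK : forall A sg, Y A sg -> K sg.
  move=> A sg [s0 [tau [_ Ks]]]; apply: (complex_sub HK Ks); first exact: fsubsetUl.
  exact/fset0Pn.
have Ymono : forall (A B : {fset iter_vtx V m.+1} -> Prop), (forall s, A s -> B s) ->
    forall sg, Y A sg -> Y B sg.
  move=> A B AB sg [s0 [tau [Htau Ks]]]; split => //.
  have PBA : forall v, P B v -> P A v by move=> v Pv x /AB; apply: Pv.
  exists [fset v in tau | `[< P B v >]]; split.
    move=> v; rewrite !inE; split; first by move=> /andP[_ /asboolP].
    by move=> Pv; apply/andP; split; [apply/Htau; apply: PBA | apply/asboolP].
  apply: (complex_sub HK Ks).
    by apply: fsetUS; apply/fsubsetP => v; rewrite !inE => /andP[].
  by have [z zs] := fset0Pn _ s0; exists z; rewrite inE zs.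
exists (fun A => iter_sd (Y A) m.+1); split; last first.
  move=> A B _ _ _ _ AB; apply: iter_sd_mono; exact: Ymono.
move=> A [HA [Asub [s0 As0]]] Hdiam.
have [x0 x0s] := complex_ne0 HA As0.
have Ax0 : A [fset x0].
  apply: (complex_sub HA As0); first by rewrite fsub1set.
  by exists x0; rewrite inE.
have [v Hv] := star_lemma HK (Asub _ Ax0).
have PAv : P A v.
  move=> x Ax; have [p [Hp sp]] := Hdiam x0 x Ax0 Ax.
  apply: (Hv (size p)) => //; exact: links_reach HKk Hp.
have Kx0 : K (@car V m.+1 x0).
  apply: car_simplex => //.
  by have [_ [H _]] := Asub _ Ax0; apply: H; rewrite inE.
pose tau := [fset w in @car V m.+1 x0 | `[< P A w >]].
have Htau : forall w, w \in tau <-> P A w.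
  move=> w; rewrite !inE; split; first by move=> /andP[_ /asboolP].
  by move=> Pw; apply/andP; split; [apply: Pw | apply/asboolP].
have tauK : tau `<=` @car V m.+1 x0 by apply/fsubsetP => w; rewrite !inE => /andP[].
have vtau : v \in tau by apply/Htau.
have AZ : forall c, A c -> iter_sd (Y A) m.+1 c.
  move=> c Ac; apply: (car_sub_complex HK (HYc A) (Asub _ Ac)).
  have Kc := car_simplex HK (Asub _ Ac).
  split; first exact: (proj1 HK).
  exists tau; split => //.
  apply: (complex_sub HK Kc); last first.
    by have [z zc] := complex_ne0 HK Kc; exists z; rewrite inE zc.
  rewrite fsubUset fsubset_refl /=.
  have [x xc] := complex_ne0 HA Ac.
  have Ax : is_vertex A x.
    apply: (complex_sub HA Ac); first by rewrite fsub1set.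
    by exists x; rewrite inE.
  apply/fsubsetP => w /Htau Pw; apply: (fsubsetP (car_sub xc)); exact: Pw x Ax.
have Yv : Y A [fset v].
  split; first by apply/fset0Pn; exists v; rewrite inE.
  exists tau; split => //.
  apply: (complex_sub HK Kx0); last by exists v; rewrite !inE eqxx.
  by rewrite fsubUset tauK andbT fsub1set (fsubsetP tauK).
have Ycone : forall sg, Y A sg -> Y A (v |` sg).
  move=> sg [_ [tau' [Htau' Ks]]]; split.
    by apply/fset0Pn; exists v; rewrite !inE eqxx.
  exists tau'; split => //.
  have vt' : v \in tau' by apply/Htau'.
  apply: (complex_sub HK Ks); last by exists v; rewrite !inE eqxx.
  apply/fsubsetP => z; rewrite !inE => /orP[/orP[/eqP->|->]|->]; by rewrite ?vt' ?orbT.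
split.
  split.
    exact: (iter_sd_complex m.+1 (HYc A)).
  split; first by move=> s; apply: iter_sd_mono; exact: YK.
  by exists s0; apply: AZ.
split; last exact: AZ.
apply: iter_contractible; first exact: HYc.
exact: (@cone_contractible R _ _ v (HYc A) Yv Ycone).
Qed.
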